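(* Let $A\in\mathbb{R}^{n\times n}$, $b\in\mathbb{R}^n$, and $\mathcal{U}=[\underline{u},\overline{u}]\subset\mathbb{R}$ with $\underline{u}<\overline{u}$. Consider the system $x[i+1]=Ax[i]+bu[i]$, $x[0]=0$, with $u[i]\in\mathcal{U}$ for all $i\in\mathbb{Z}_{\ge 0}$, and let $\mathcal{R}(i,0)$ denote its reachable set at time $i$ (with $\mathcal{R}(0,0)=\{0\}$). Then for every $i\in\mathbb{N}$, $$A^{i-1}b\,\mathcal{U}=\mathcal{R}(i,0)\ominus\mathcal{R}(i-1,0).$$
   Context: The reachable set at time $i$ is $\mathcal{R}(i,0)=\{\phi_u(i;0)\mid u:\mathbb{Z}_{\ge0}\to\mathcal{U}\}$, where $\phi_u(\cdot;0)$ is the trajectory of the system with initial state $0$ under the input sequence $u$. For $B\in\mathbb{R}^{n\times m}$ and $\mathcal{X}\subset\mathbb{R}^m$, $B\mathcal{X}=\{Bx\mid x\in\mathcal{X}\}$. For $\mathcal{A},\mathcal{B}\subset\mathbb{R}^n$, the Minkowski sum is $\mathcal{A}\oplus\mathcal{B}=\{a+b\mid a\in\mathcal{A},b\in\mathcal{B}\}$ and the Minkowski difference is $\mathcal{A}\ominus\mathcal{B}=\{c\in\mathbb{R}^n\mid \{c\}\oplus\mathcal{B}\subseteq\mathcal{A}\}$. *)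

(* Defs.v *)
From HB Require Import structures.
From mathcomp Require Import all_boot all_order all_algebra.
From mathcomp Require Import classical_sets reals.
Set Implicit Arguments. Unset Strict Implicit. Unset Printing Implicit Defensive.
Import Order.TTheory GRing.Theory Num.Theory.
Local Open Scope ring_scope.
Local Open Scope classical_set_scope.

Fixpoint traj (R : pzRingType) (n : nat) (A : 'M[R]_n) (b : 'cV[R]_n)
  (u : nat -> R) (i : nat) : 'cV[R]_n :=
  match i with
  | 0 => 0
  | k.+1 => A *m traj A b u k + u k *: b
  end.

Definition reach (R : pzRingType) (n : nat) (A : 'M[R]_n) (b : 'cV[R]_n)
  (U : set R) (i : nat) : set 'cV[R]_n :=
  [set x | exists u : nat -> R, (forall k, U (u k)) /\ traj A b u i = x].

Definition Icc (R : realType) (lo hi : R) : set R := [set x | lo <= x <= hi].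

(* B X for a column vector B in R^{n x 1} and X a subset of R (= R^1). *)
Definition vec_image (R : pzRingType) (n : nat) (B : 'cV[R]_n) (X : set R)
  : set 'cV[R]_n := [set x *: B | x in X].

Definition msum (V : zmodType) (X Y : set V) : set V :=
  [set a + b | a in X & b in Y].
Definition mdiff (V : zmodType) (X Y : set V) : set V :=
  [set c | msum [set c] Y `<=` X].

(* Main.v *)
Require Import Defs.
From HB Require Import structures.
From mathcomp Require Import all_boot all_order all_algebra.
From mathcomp Require Import classical_sets reals.
From mathcomp Require Import lra.
Import Order.TTheory GRing.Theory Num.Theory.
Local Open Scope ring_scope.
Local Open Scope classical_set_scope.

Section S.
Variable R : realType.
Variable n : nat.

Definition dot (w x : 'cV[R]_n) : R := \sum_j w j 0 * x j 0.

Lemma dotD w x y : dot w (x + y) = dot w x + dot w y.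
Proof. by rewrite /dot -big_split /=; apply: eq_bigr => j _; rewrite mxE mulrDr. Qed.

Lemma dotZ w a x : dot w (a *: x) = a * dot w x.
Proof. by rewrite /dot mulr_sumr; apply: eq_bigr => j _; rewrite mxE mulrCA. Qed.

Lemma dotN w x : dot w (- x) = - dot w x.
Proof. by rewrite -scaleN1r dotZ mulN1r. Qed.

Lemma dotC w x : dot w x = dot x w.
Proof. by apply: eq_bigr => j _; rewrite mulrC. Qed.

Lemma dotB w x y : dot w (x - y) = dot w x - dot w y.
Proof. by rewrite dotD dotN. Qed.

Lemma dot_ge0 x : 0 <= dot x x.
Proof. by apply: sumr_ge0 => j _; rewrite -expr2 sqr_ge0. Qed.

Lemma dot_eq0 x : dot x x <= 0 -> x = 0.
Proof.
move=> h.
have h0 : dot x x = 0 by apply/eqP; rewrite eq_le h dot_ge0.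
apply/matrixP => j k; rewrite (ord1 k) mxE.
have hj : x j 0 * x j 0 = 0.
  by apply: (psumr_eq0P _ h0) => // l _; rewrite -expr2 sqr_ge0.
by move/eqP: hj; rewrite mulf_eq0 orbb => /eqP.
Qed.

Variable A : 'M[R]_n.
Variable b : 'cV[R]_n.

Lemma traj_dec (u : nat -> R) m :
  traj A b u m.+1 = u 0%N *: (A ^+ m *m b) + traj A b (fun k => u k.+1) m.
Proof.
elim: m u => [|m IH] u /=.
  by rewrite mulmx0 add0r expr0 mul1mx addr0.
rewrite [in LHS]/traj -/(traj A b u m.+1).
rewrite IH mulmxDr addrA exprS -mulmxA -scalemxAr.
by [].
Qed.

Variables lo hi : R.

Lemma traj_max (w : 'cV[R]_n) (m : nat) : lo <= hi -> exists us : nat -> R, (forall k, Icc lo hi (us k)) /\ (forall u : nat -> R, (forall k, Icc lo hi (u k)) ->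
     dot w (traj A b u m) <= dot w (traj A b us m)).
Proof.
move=> hlh.
have hlo : Icc lo hi lo by rewrite /Icc /= lexx hlh.
have hhi : Icc lo hi hi by rewrite /Icc /= lexx hlh.
elim: m => [|m [us [hus IH]]].
  by exists (fun _ => lo); split=> // u _ /=.
pose d := dot w (A ^+ m *m b).
pose u0 := if 0 <= d then hi else lo.
exists (fun k => if k is k'.+1 then us k' else u0); split.
  by case=> [|k] //; rewrite /u0; case: ifP.
move=> u hu; rewrite !traj_dec !dotD !dotZ /=.
apply: lerD; last by apply: IH => k; apply: hu.
rewrite /u0 -/d; case: ifP => hd.
  by apply: ler_wpM2r => //; case/andP: (hu 0%N).
by apply: ler_wnM2r; [rewrite ltW // ltNge hd | case/andP: (hu 0%N)].
Qed.


End S.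
Arguments dot {R n}.
Arguments dot_eq0 {R n}.
Arguments dot_ge0 {R n}.
Arguments dotC {R n}.
Arguments dotB {R n}.
Arguments dotZ {R n}.
Arguments dotN {R n}.
Arguments dotD {R n}.
Arguments traj_dec {R n}.

Theorem theorem1 (R : realType) (n : nat) (A : 'M[R]_n) (b : 'cV[R]_n)
  (ulo uhi : R) (hu : ulo < uhi) (i : nat) (hi : (0 < i)%N) :
  vec_image (A ^+ i.-1 *m b) (Icc ulo uhi)
  = mdiff (reach A b (Icc ulo uhi) i) (reach A b (Icc ulo uhi) i.-1).
Proof.
case: i hi => // m _ /=.
set v := A ^+ m *m b.
rewrite eqEsubset; split.
  move=> x [t ht <-]; rewrite /mdiff /= => y [a /= -> [q [u [hu' <-]] <-]].
  exists (fun k => if k is k'.+1 then u k' else t); split.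
    by case.
  by rewrite traj_dec.
move=> c hc.
have key : forall w, dot w c <= Num.max (ulo * dot w v) (uhi * dot w v).
  move=> w.
  have [us [hus hmax]] := @traj_max R n A b ulo uhi w m (ltW hu).
  have : reach A b (Icc ulo uhi) m.+1 (c + traj A b us m).
    by apply: hc; exists c => //; exists (traj A b us m) => //; exists us.
  case=> u [hu' e].
  have e' := congr1 (dot w) e.
  rewrite traj_dec !dotD dotZ -/v in e'.
  have h2 := hmax _ (fun k => hu' k.+1).
  have h1 : dot w c <= u 0%N * dot w v by lra.
  apply: (le_trans h1).
  case/andP: (hu' 0%N) => hl hh.
  have [hd|hd] := leP 0 (dot w v).
    by rewrite le_max (ler_wpM2r hd hh) orbT.
  by rewrite le_max (ler_wnM2r (ltW hd) hl).
have [d0|dpos] := eqVneq (dot v v) 0.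
  have v0 : v = 0 by apply: dot_eq0; rewrite d0.
  have dw0 : dot c v = 0 by rewrite v0 -(subrr (0:'cV_n)) dotB subrr.
  have := key c; rewrite dw0 !mulr0 maxxx => /dot_eq0 ->.
  by exists ulo; [rewrite /Icc /= lexx ltW | rewrite v0 scaler0].
have dp : 0 < dot v v by rewrite lt_def dpos dot_ge0.
pose t := dot c v / dot v v.
pose w := c - t *: v.
have wv : dot w v = 0.
  by rewrite /w dotC dotB dotZ (dotC v c) /t divfK ?subrr.
have cw : c = t *: v.
  apply/eqP; rewrite -subr_eq0; apply/eqP; rewrite -/w.
  apply: dot_eq0.
  have := key w; rewrite wv !mulr0 maxxx.
  by rewrite {2}/w dotB dotZ wv mulr0 subr0.
exists t => //.
have k1 := key v; have k2 := key (- v).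
rewrite cw dotZ in k1 k2.
rewrite dotZ !(dotC (- v) v) !dotN !mulrN in k2.
have lt1 : ulo * dot v v < uhi * dot v v by rewrite ltr_pM2r.
rewrite max_r in k1; last by apply: ltW.
rewrite max_l in k2; last by rewrite lerN2 ltW.
rewrite /Icc /=; apply/andP; split.
  by rewrite -(ler_pM2r dp); lra.
by rewrite -(ler_pM2r dp).
Qed.
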